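(* Let $l_{\max}\ge 1$ be an integer, let $C_1,\dots,C_{l_{\max}}\in\mathbb{R}$, and let $N_0\in\mathbb{N}$. For each integer $N\ge N_0$ let $E^N_1,\dots,E^N_N$ be a symmetric sequence of events (on some probability space depending on $N$) whose correlation coefficients $C^{(N)}_k$, $1\le k\le N$, satisfy $C^{(N)}_k=C_k$ for $1\le k\le l_{\max}$ and $C^{(N)}_k=0$ for $l_{\max}<k\le N$ (i.e. for every $N\ge N_0$ the sequence is correlated up to order $l_{\max}$ with the same correlation coefficients $C_1,\dots,C_{l_{\max}}$). Let $p_N$ denote the count probability of $E^N_1,\dots,E^N_N$. Then for every $s\in\mathbb{N}_0$ the limit $p_\infty(s):=\lim_{N\to\infty}p_N(s)$ exists, and the characteristic function of $p_\infty$ is $$\chi(u)=\sum_{s=0}^\infty e^{ius}p_\infty(s)=\exp\Big[\sum_{l=1}^{l_{\max}}\sum_{t=0}^{l}(-1)^{l-t}\frac{C_l}{l!}\binom{l}{t}e^{itu}\Big],\qquad u\in\mathbb{R}.$$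
   Context: For an event $E$ on a probability space $(\Omega,\Sigma,P)$, $\mathbbm{1}_E$ denotes its indicator function. A finite sequence of events $E_1,\dots,E_N$ on a common probability space is called symmetric if for all $r_1,\dots,r_N\in\{0,1\}$ and all permutations $\sigma$ of $\{1,\dots,N\}$, $P(\mathbbm{1}_{E_1}=r_1,\dots,\mathbbm{1}_{E_N}=r_N)=P(\mathbbm{1}_{E_1}=r_{\sigma(1)},\dots,\mathbbm{1}_{E_N}=r_{\sigma(N)})$. For $1\le k\le N$ the probability function of order $k$ is $P_k(r_1,\dots,r_k):=\sum_{r_{k+1},\dots,r_N\in\{0,1\}}P(\mathbbm{1}_{E_1}=r_1,\dots,\mathbbm{1}_{E_N}=r_N)$. The correlation functions $G_k:\{0,1\}^k\to\mathbb{R}$ are defined by $G_1:=P_1$ and, recursively for $1<k\le N$, $$G_k(r_1,\dots,r_k):=P_k(r_1,\dots,r_k)-\sum_{\sigma}\sum_{l=1}^{k-1}\frac{1}{(l-1)!\,(k-l)!}G_l(r_1,r_{\sigma(2)},\dots,r_{\sigma(l)})\,P_{k-l}(r_{\sigma(l+1)},\dots,r_{\sigma(k)}),$$ where $\sigma$ runs over all permutations of $\{2,\dots,k\}$. The correlation coefficient of order $k$ is $C_k:=N^kG_k(1,\dots,1)$. The count probability is $p_N(s):=\mathbb{E}\big[\delta(s-\sum_{l=1}^N\mathbbm{1}_{E_l})\big]$ for $s\in\mathbb{N}_0$, where $\delta(0)=1$ and $\delta(k)=0$ for $k\neq0$; i.e. $p_N(s)$ is the probability that exactly $s$ of the events occur.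 *)

(* Defs.v *)
From Stdlib Require Import Reals List Permutation Arith.
Import ListNotations.
Open Scope R_scope.

Definition sumR (l : list R) : R := fold_right Rplus 0 l.

Fixpoint bools (n : nat) : list (list bool) :=
  match n with
  | O => [[]]
  | S m => flat_map (fun r => [true :: r; false :: r]) (bools m)
  end.

(* All rearrangements of a list by permutations of positions
   (exactly (length l)! lists, one per permutation sigma). *)
Fixpoint insert_all {A : Type} (x : A) (l : list A) : list (list A) :=
  match l with
  | [] => [[x]]
  | y :: l' => (x :: y :: l') :: map (cons y) (insert_all x l')
  end.

Fixpoint perms {A : Type} (l : list A) : list (list A) :=
  match l with
  | [] => [[]]
  | x :: l' => flat_map (insert_all x) (perms l')
  end.

(* A sequence of N events E_1..E_N is described by the joint law of its
   indicators: P r = P(1_{E_1} = r_1, ..., 1_{E_N} = r_N) for r of length N. *)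
Definition is_joint_law (N : nat) (P : list bool -> R) : Prop :=
  (forall r, length r = N -> 0 <= P r) /\ sumR (map P (bools N)) = 1.

Definition symmetric (N : nat) (P : list bool -> R) : Prop :=
  forall r r', length r = N -> Permutation r r' -> P r = P r'.

Definition Pk (N : nat) (P : list bool -> R) (k : nat) (r : list bool) : R :=
  sumR (map (fun rest => P (r ++ rest)) (bools (N - k))).

(* Gs N P m l r = G_l(r) for 1 <= l <= m (strong recursion on the order).
   For order k = S m', with r = r_1 :: tl, sigma ranging over permutations of
   (r_2..r_k) (= tl):
   G_k(r) = P_k(r) - sum_sigma sum_{j=1}^{k-1} 1/((j-1)!(k-j)!)
              G_j(r_1, sigma_2..sigma_j) P_{k-j}(sigma_{j+1}..sigma_k). *)
Fixpoint Gs (N : nat) (P : list bool -> R) (m l : nat) (r : list bool) : R :=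
  match m with
  | O => 0
  | S m' =>
      if Nat.leb l m' then Gs N P m' l r
      else
        Pk N P m r -
        sumR (map (fun sg =>
          sumR (map (fun j =>
            / (INR (fact (j - 1)) * INR (fact (m - j))) *
            Gs N P m' j (hd false r :: firstn (j - 1) sg) *
            Pk N P (m - j) (skipn (j - 1) sg))
          (seq 1 m')))
        (perms (tl r)))
  end.

Definition G (N : nat) (P : list bool -> R) (k : nat) (r : list bool) : R :=
  Gs N P k k r.

Definition corr_coef (N : nat) (P : list bool -> R) (k : nat) : R :=
  (INR N) ^ k * G N P k (repeat true k).

Definition count_true (r : list bool) : nat :=
  length (filter (fun b : bool => b) r).

Definition count_prob (N : nat) (P : list bool -> R) (s : nat) : R :=
  sumR (map (fun r => P r * (if Nat.eqb s (count_true r) then 1 else 0))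
            (bools N)).

(* Exponent of the characteristic function:
   sum_{l=1}^{lmax} sum_{t=0}^{l} (-1)^(l-t) C_l / l! binom(l,t) e^{itu},
   split into real part (cos) and imaginary part (sin). *)
Definition expo_re (lmax : nat) (C : nat -> R) (u : R) : R :=
  sumR (map (fun l => sumR (map (fun t =>
     (-1) ^ (l - t) * (C l / INR (fact l)) * Binomial.C l t * cos (INR t * u))
     (seq 0 (S l)))) (seq 1 lmax)).

Definition expo_im (lmax : nat) (C : nat -> R) (u : R) : R :=
  sumR (map (fun l => sumR (map (fun t =>
     (-1) ^ (l - t) * (C l / INR (fact l)) * Binomial.C l t * sin (INR t * u))
     (seq 0 (S l)))) (seq 1 lmax)).

(* Main.v *)
Require Import Defs.
From Coquelicot Require Import Coquelicot.
From Stdlib Require Import Reals List Permutation Arith Lia Lra.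
Import ListNotations.
Open Scope R_scope.


Definition sm (n : nat) (f : nat -> R) : R := sumR (map f (seq 0 n)).

Lemma sumR_app l1 l2 : sumR (l1 ++ l2) = sumR l1 + sumR l2.
Proof. induction l1; simpl; [lra| rewrite IHl1; lra]. Qed.

Lemma sm_0 f : sm 0 f = 0.
Proof. reflexivity. Qed.

Lemma sm_S n f : sm (S n) f = sm n f + f n.
Proof. unfold sm. rewrite seq_S, map_app, sumR_app. simpl. lra. Qed.

Lemma sm_ext n f g : (forall k, (k < n)%nat -> f k = g k) -> sm n f = sm n g.
Proof.
  induction n; intros H; [reflexivity|]. rewrite !sm_S, IHn, H; auto.
Qed.

Lemma sm_shift n f : sm (S n) f = f 0%nat + sm n (fun k => f (S k)).
Proof.
  induction n; [unfold sm; simpl; lra|]. rewrite sm_S, IHn, sm_S. lra.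
Qed.

Lemma sm_plus n f g : sm n (fun k => f k + g k) = sm n f + sm n g.
Proof. induction n; [unfold sm; simpl; lra|]. rewrite !sm_S, IHn; lra. Qed.

Lemma sm_minus n f g : sm n (fun k => f k - g k) = sm n f - sm n g.
Proof. induction n; [unfold sm; simpl; lra|]. rewrite !sm_S, IHn; lra. Qed.

Lemma sm_scal n c f : sm n (fun k => c * f k) = c * sm n f.
Proof. induction n; [unfold sm; simpl; lra|]. rewrite !sm_S, IHn; lra. Qed.

Lemma sm_const0 n : sm n (fun _ => 0) = 0.
Proof. induction n; [reflexivity|]. rewrite sm_S, IHn; lra. Qed.

Lemma sm_swap n m f : sm n (fun i => sm m (fun j => f i j)) = sm m (fun j => sm n (fun i => f i j)).
Proof.
  induction n.
  - rewrite sm_0. symmetry. apply sm_const0.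
  - rewrite sm_S, IHn. rewrite <- sm_plus. apply sm_ext. intros. rewrite sm_S. reflexivity.
Qed.

Lemma sm_tail n m f : (n <= m)%nat -> (forall k, (n <= k < m)%nat -> f k = 0) -> sm m f = sm n f.
Proof.
  intros Hnm H. induction m.
  - assert (n = 0%nat) by lia. subst. reflexivity.
  - destruct (Nat.eq_dec n (S m)). subst; reflexivity.
    rewrite sm_S, IHm, H; try lra; try lia. intros; apply H; lia.
Qed.

Lemma sm_le n f g : (forall k, (k < n)%nat -> f k <= g k) -> sm n f <= sm n g.
Proof.
  induction n; intros H; [unfold sm; simpl; lra|]. rewrite !sm_S.
  assert (sm n f <= sm n g) by (apply IHn; auto). specialize (H n). assert (f n <= g n) by (apply H; lia). lra.
Qed.

Lemma sm_abs n f : Rabs (sm n f) <= sm n (fun k => Rabs (f k)).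
Proof.
  induction n; [unfold sm; simpl; rewrite Rabs_R0; lra|]. rewrite !sm_S.
  eapply Rle_trans; [apply Rabs_triang|]. lra.
Qed.

Lemma sm_sum_f_R0 f n : sum_f_R0 f n = sm (S n) f.
Proof. induction n; [unfold sm; simpl; lra|]. simpl sum_f_R0. rewrite IHn, (sm_S (S n)). reflexivity. Qed.

Lemma sumR_seq1 m f : sumR (map f (seq 1 m)) = sm m (fun j => f (S j)).
Proof. unfold sm. rewrite <- seq_shift, map_map. reflexivity. Qed.

Lemma sumR_map_plus {A} (l : list A) f g : sumR (map (fun x => f x + g x) l) = sumR (map f l) + sumR (map g l).
Proof. induction l; simpl; [lra|]. rewrite IHl; lra. Qed.

Lemma sumR_map_scal {A} (l : list A) c f : sumR (map (fun x => c * f x) l) = c * sumR (map f l).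
Proof. induction l; simpl; [lra|]. rewrite IHl; lra. Qed.

Lemma sumR_map_ext {A} (l : list A) f g : (forall x, In x l -> f x = g x) -> sumR (map f l) = sumR (map g l).
Proof. induction l; simpl; intros H; [lra|]. rewrite H, IHl; auto. Qed.

Lemma sumR_map_repeat {A} (a : A) n f : sumR (map f (repeat a n)) = INR n * f a.
Proof. induction n; simpl; [lra|]. rewrite IHn. destruct n; simpl; lra. Qed.


Fixpoint bn (n k : nat) : R :=
  match n, k with
  | _, O => 1
  | O, S _ => 0
  | S n', S k' => bn n' k' + bn n' (S k')
  end.

Lemma bn_0 n : bn n 0 = 1. Proof. destruct n; reflexivity. Qed.
Lemma bn_SS n k : bn (S n) (S k) = bn n k + bn n (S k). Proof. reflexivity. Qed.

Lemma bn_gt n k : (n < k)%nat -> bn n k = 0.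
Proof.
  revert k; induction n; intros k H; destruct k; try lia; simpl; auto.
  rewrite !IHn; lia || lra.
Qed.

Lemma bn_ge0 n k : 0 <= bn n k.
Proof. revert k; induction n; intros k; destruct k; simpl; try lra. pose proof (IHn k); pose proof (IHn (S k)). lra. Qed.

Lemma bn_le_pow n k : bn n k <= 2 ^ n.
Proof.
  revert k; induction n; intros k; destruct k; simpl; try lra.
  - pose proof (pow_le 2 n). specialize (IHn 0%nat). rewrite bn_0 in *. lra.
  - specialize (IHn k) as H1; specialize (IHn (S k)). lra.
Qed.

Lemma bn_nn n : bn n n = 1.
Proof. induction n; [reflexivity|]. rewrite bn_SS, IHn, bn_gt; lia || lra. Qed.

Lemma sumR_flat_map {A B} (g : A -> list B) f l :
  sumR (map f (flat_map g l)) = sumR (map (fun x => sumR (map f (g x))) l).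
Proof. induction l; simpl; [reflexivity|]. rewrite map_app, sumR_app, IHl. reflexivity. Qed.

Lemma sum_bools_S m f : sumR (map f (bools (S m))) =
  sumR (map (fun r => f (true :: r) + f (false :: r)) (bools m)).
Proof. simpl. rewrite sumR_flat_map. apply sumR_map_ext. intros. simpl. lra. Qed.

Lemma bools_length n r : In r (bools n) -> length r = n.
Proof.
  revert r; induction n; simpl; intros r H.
  - destruct H as [<-|[]]; reflexivity.
  - apply in_flat_map in H. destruct H as [x [Hx H]]. simpl in H.
    destruct H as [<-|[<-|[]]]; simpl; f_equal; auto.
Qed.

Lemma count_true_le r : (count_true r <= length r)%nat.
Proof. unfold count_true. apply filter_length_le. Qed.

Lemma count_true_cons b r : count_true (b :: r) = ((if b then 1 else 0) + count_true r)%nat.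
Proof. unfold count_true. destruct b; reflexivity. Qed.

Lemma sym_cons n P b : symmetric (S n) P -> symmetric n (fun r => P (b :: r)).
Proof. intros H r r' Hl Hp. apply H. simpl; auto. apply perm_skip; auto. Qed.

Definition T n k (P : list bool -> R) := sumR (map (fun r => P r * bn (count_true r) k) (bools n)).

Lemma T_big n k P : (n < k)%nat -> T n k P = 0.
Proof.
  intros H. unfold T. rewrite (sumR_map_ext _ _ (fun _ => 0)).
  - clear. induction (bools n); simpl; lra.
  - intros r Hr. apply bools_length in Hr. rewrite bn_gt. lra. pose proof (count_true_le r). lia.
Qed.

Lemma T_eq n : forall k P, symmetric n P -> (k <= n)%nat -> T n k P = bn n k * Pk n P k (repeat true k).
Proof.
  induction n; intros k P HP Hk.
  - assert (k = 0%nat) by lia. subst. unfold T, Pk. simpl. lra.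
  - unfold T at 1. rewrite sum_bools_S.
    destruct k as [|k'].
    + unfold Pk. simpl (S n - 0)%nat. rewrite sum_bools_S. rewrite bn_0.
      rewrite Rmult_1_l. apply sumR_map_ext. intros. rewrite !bn_0. simpl. lra.
    + assert (E: sumR (map (fun r => P (true :: r) * bn (count_true (true :: r)) (S k') +
                   P (false :: r) * bn (count_true (false :: r)) (S k')) (bools n))
               = T n k' (fun r => P (true :: r)) + (T n (S k') (fun r => P (true :: r)) + T n (S k') (fun r => P (false :: r)))).
      { unfold T. rewrite <- !sumR_map_plus. apply sumR_map_ext. intros r _.
        rewrite !count_true_cons. simpl (1 + count_true r)%nat. rewrite bn_SS. simpl (0 + _)%nat. lra. }
      rewrite E; clear E.
      rewrite (IHn k' (fun r => P (true :: r))) by (first [apply sym_cons; exact HP | lia]).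
      assert (Hm : Pk n (fun r => P (true :: r)) k' (repeat true k') = Pk (S n) P (S k') (repeat true (S k'))).
      { unfold Pk. reflexivity. }
      rewrite Hm. destruct (Nat.eq_dec k' n) as [->|Hne].
      * rewrite !T_big by lia. rewrite bn_SS, (bn_gt n (S n)) by lia. lra.
      * rewrite !IHn by (first [apply sym_cons; exact HP | lia]).
        rewrite bn_SS. rewrite <- Hm.
        assert (Hs : Pk n (fun r => P (true :: r)) (S k') (repeat true (S k')) +
                     Pk n (fun r => P (false :: r)) (S k') (repeat true (S k')) = Pk (S n) P (S k') (repeat true (S k'))).
        { unfold Pk. rewrite <- sumR_map_plus.
          replace (S n - S k')%nat with (S (n - S k')) by lia. rewrite sum_bools_S.
          apply sumR_map_ext. intros rest Hr. apply bools_length in Hr.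
          f_equal; apply HP; try (simpl; rewrite length_app, repeat_length; lia);
          apply (Permutation_middle (repeat true (S k')) rest). }
        rewrite Hm, <- Hs. lra.
Qed.

Definition ee (c s : nat) := sm (S c) (fun k => (-1) ^ (k + s) * bn k s * bn c k).

Lemma ee_eq c : forall s, ee c s = if Nat.eqb s c then 1 else 0.
Proof.
  induction c; intros s.
  - unfold ee, sm. simpl. destruct s; simpl; [lra|]. lra.
  - assert (Hsplit : ee (S c) s = ee c s +
       sm (S c) (fun j => (-1) ^ (S j + s) * bn (S j) s * bn c j)).
    { unfold ee. rewrite (sm_shift (S c) (fun k => (-1) ^ (k + s) * bn k s * bn (S c) k)).
      rewrite (sm_shift c (fun k => (-1) ^ (k + s) * bn k s * bn c k)).
      rewrite !bn_0.
      assert (H3: sm (S c) (fun j => (-1) ^ (S j + s) * bn (S j) s * bn (S c) (S j)) =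
                  sm (S c) (fun j => (-1) ^ (S j + s) * bn (S j) s * bn c j) +
                  sm (S c) (fun j => (-1) ^ (S j + s) * bn (S j) s * bn c (S j))).
      { rewrite <- sm_plus. apply sm_ext. intros. rewrite bn_SS. lra. }
      rewrite H3. rewrite (sm_S c (fun j => (-1) ^ (S j + s) * bn (S j) s * bn c (S j))).
      rewrite (bn_gt c (S c)) by lia. lra. }
    rewrite Hsplit. destruct s as [|s'].
    + assert (sm (S c) (fun j => (-1) ^ (S j + 0) * bn (S j) 0 * bn c j) = - ee c 0).
      { unfold ee. enough (sm (S c) (fun j => (-1) ^ (S j + 0) * bn (S j) 0 * bn c j) = (-1) * sm (S c) (fun k => (-1) ^ (k + 0) * bn k 0 * bn c k)) by lra.
        rewrite <- sm_scal. apply sm_ext. intros. rewrite !bn_0. simpl. lra. }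
      rewrite H. simpl. lra.
    + assert (sm (S c) (fun j => (-1) ^ (S j + S s') * bn (S j) (S s') * bn c j) = - ee c (S s') + ee c s').
      { unfold ee. replace (- _ + _) with ((-1) * sm (S c) (fun k => (-1) ^ (k + S s') * bn k (S s') * bn c k) + sm (S c) (fun k => (-1) ^ (k + s') * bn k s' * bn c k)) by lra.
        rewrite <- sm_scal, <- sm_plus. apply sm_ext. intros k _. rewrite bn_SS.
        replace (k + S s')%nat with (S (k + s')) by lia. replace (S k + S s')%nat with (S (S (k+s'))) by lia.
        simpl. lra. }
      rewrite H, IHc, IHc. simpl. destruct (Nat.eqb s' c); lra.
Qed.

Lemma sumR_sm_swap {A} (l : list A) m (g : A -> nat -> R) :
  sumR (map (fun r => sm m (g r)) l) = sm m (fun k => sumR (map (fun r => g r k) l)).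
Proof.
  induction l; simpl.
  - symmetry; apply sm_const0.
  - rewrite IHl, <- sm_plus. reflexivity.
Qed.

Lemma count_prob_formula n P s : symmetric n P ->
  count_prob n P s = sm (S n) (fun k => (-1) ^ (k + s) * bn k s * (bn n k * Pk n P k (repeat true k))).
Proof.
  intros HP. unfold count_prob.
  rewrite (sumR_map_ext _ _ (fun r => sm (S n) (fun k => P r * ((-1) ^ (k + s) * bn k s * bn (count_true r) k)))).
  - rewrite sumR_sm_swap. apply sm_ext. intros k Hk. rewrite <- T_eq by (auto; lia).
    unfold T. rewrite <- sumR_map_scal. apply sumR_map_ext. intros. lra.
  - intros r Hr. apply bools_length in Hr. pose proof (count_true_le r).
    rewrite <- ee_eq. unfold ee. rewrite sm_scal. f_equal.
    symmetry. apply sm_tail. lia. intros k Hk. rewrite (bn_gt (count_true r) k) by lia. lra.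
Qed.


Lemma insert_all_repeat {A} (x : A) m : insert_all x (repeat x m) = repeat (repeat x (S m)) (S m).
Proof.
  induction m; [reflexivity|]. simpl. rewrite IHm. simpl. f_equal. f_equal.
  rewrite map_repeat. reflexivity.
Qed.

Lemma flat_map_repeat {A B} (f : A -> list B) a n : flat_map f (repeat a n) = concat (repeat (f a) n).
Proof. induction n; simpl; [reflexivity|]. rewrite IHn. reflexivity. Qed.

Lemma concat_repeat_repeat {A} (b : A) k n : concat (repeat (repeat b k) n) = repeat b (n * k).
Proof. induction n; simpl; [reflexivity|]. rewrite IHn, repeat_app. reflexivity. Qed.

Lemma perms_repeat {A} (x : A) m : perms (repeat x m) = repeat (repeat x m) (fact m).
Proof.
  induction m; [reflexivity|]. simpl repeat at 1. simpl perms. rewrite IHm, flat_map_repeat, insert_all_repeat,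
  concat_repeat_repeat. f_equal. simpl fact. lia.
Qed.

Lemma firstn_repeat' {A} (x : A) i m : (i <= m)%nat -> firstn i (repeat x m) = repeat x i.
Proof. revert m; induction i; intros m H; [reflexivity|]. destruct m; [lia|]. simpl. rewrite IHi; auto; lia. Qed.

Lemma skipn_repeat' {A} (x : A) i m : skipn i (repeat x m) = repeat x (m - i).
Proof. revert m; induction i; intros m; [simpl; rewrite Nat.sub_0_r; reflexivity|]. destruct m; [reflexivity|]. simpl. apply IHi. Qed.

Lemma Gs_le N P m l r : (l <= m)%nat -> Gs N P m l r = G N P l r.
Proof.
  unfold G. induction m; intros H.
  - assert (l = 0%nat) by lia; subst; reflexivity.
  - destruct (Nat.eq_dec l (S m)) as [->|Hne]; [reflexivity|].
    simpl. replace (Nat.leb l m) with true by (symmetry; apply Nat.leb_le; lia). apply IHm. lia.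
Qed.

Lemma G_unfold N P m' : G N P (S m') (repeat true (S m')) =
  Pk N P (S m') (repeat true (S m')) -
  INR (fact m') * sm m' (fun j0 => / (INR (fact j0) * INR (fact (m' - j0))) *
        G N P (S j0) (repeat true (S j0)) * Pk N P (m' - j0) (repeat true (m' - j0))).
Proof.
  unfold G at 1. simpl Gs. replace (match m' with 0%nat => false | S m'0 => (m' <=? m'0)%nat end) with false by (destruct m'; [reflexivity| symmetry; apply Nat.leb_gt; lia]). simpl (tl _). simpl (hd _ _).
  rewrite perms_repeat, sumR_map_repeat. f_equal. f_equal.
  rewrite sumR_seq1. apply sm_ext. intros j0 Hj0. simpl (S j0 - 1)%nat. rewrite Nat.sub_0_r.
  rewrite firstn_repeat' by lia. rewrite skipn_repeat'. rewrite Gs_le by lia. reflexivity.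
Qed.

Fixpoint blist (D : nat -> R) (k : nat) : list R :=
  match k with
  | O => [1]
  | S k' => (/ INR (S k') * sm (S k') (fun i => D (S i) * nth i (blist D k') 0)) :: blist D k'
  end.

Definition bseq D k := hd 0 (blist D k).

Lemma nth_blist D k i : (i <= k)%nat -> nth i (blist D k) 0 = bseq D (k - i).
Proof.
  revert i; induction k; intros i H.
  - assert (i = 0%nat) by lia; subst; reflexivity.
  - destruct i; [reflexivity|]. simpl. apply IHk. lia.
Qed.

Lemma bseq_0 D : bseq D 0 = 1. Proof. reflexivity. Qed.

Lemma bseq_S D k : bseq D (S k) = / INR (S k) * sm (S k) (fun i => D (S i) * bseq D (k - i)).
Proof. unfold bseq at 1. simpl. f_equal. apply sm_ext. intros. rewrite nth_blist by lia. reflexivity. Qed.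

Definition Dof (Cp : nat -> R) (j : nat) := Cp j / INR (fact (j - 1)).

Lemma Dof_S Cp j : Dof Cp (S j) = Cp (S j) / INR (fact j).
Proof. unfold Dof. simpl (S j - 1)%nat. rewrite Nat.sub_0_r. reflexivity. Qed.

Lemma fact_pos' n : 0 < INR (fact n).
Proof. apply lt_0_INR. apply lt_O_fact. Qed.

Lemma main_rec N P (Cp : nat -> R) : (1 <= N)%nat ->
  Pk N P 0 [] = 1 ->
  (forall j, (1 <= j)%nat -> (j <= N)%nat -> INR N ^ j * G N P j (repeat true j) = Cp j) ->
  forall k, (k <= N)%nat -> INR N ^ k * Pk N P k (repeat true k) = INR (fact k) * bseq (Dof Cp) k.
Proof.
  intros HN H0 HG k. induction k as [k IH] using lt_wf_ind. intros Hk.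
  destruct k as [|m'].
  - simpl. rewrite H0, bseq_0. lra.
  - assert (HNp : 0 < INR N) by (apply lt_0_INR; lia).
    pose proof (G_unfold N P m') as HU.
    assert (Hmk : Pk N P (S m') (repeat true (S m')) = G N P (S m') (repeat true (S m')) +
      INR (fact m') * sm m' (fun j0 => / (INR (fact j0) * INR (fact (m' - j0))) *
        G N P (S j0) (repeat true (S j0)) * Pk N P (m' - j0) (repeat true (m' - j0)))) by lra.
    rewrite Hmk, Rmult_plus_distr_l, HG by lia.
    rewrite bseq_S, sm_S. rewrite Nat.sub_diag, bseq_0.
    assert (Hs : INR N ^ S m' * (INR (fact m') * sm m' (fun j0 => / (INR (fact j0) * INR (fact (m' - j0))) *
        G N P (S j0) (repeat true (S j0)) * Pk N P (m' - j0) (repeat true (m' - j0)))) =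
        INR (fact m') * sm m' (fun i => Dof Cp (S i) * bseq (Dof Cp) (m' - i))).
    { rewrite <- Rmult_assoc, (Rmult_comm (INR N ^ S m')), Rmult_assoc. f_equal.
      rewrite <- sm_scal. apply sm_ext. intros j0 Hj0.
      replace (S m') with (S j0 + (m' - j0))%nat at 1 by lia. rewrite pow_add.
      assert (E1 := HG (S j0) ltac:(lia) ltac:(lia)).
      assert (E2 := IH (m' - j0)%nat ltac:(lia) ltac:(lia)).
      rewrite Dof_S.
      pose proof (fact_pos' j0). pose proof (fact_pos' (m' - j0)).
      transitivity (/ (INR (fact j0) * INR (fact (m' - j0))) * (INR N ^ S j0 * G N P (S j0) (repeat true (S j0))) *
         (INR N ^ (m' - j0) * Pk N P (m' - j0) (repeat true (m' - j0)))); [ring|].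
      rewrite E1, E2. field. split; lra. }
    rewrite Hs, Dof_S.
    pose proof (fact_pos' m').
    replace (INR (fact (S m'))) with (INR (S m') * INR (fact m')) by (rewrite <- mult_INR; reflexivity).
    assert (0 < INR (S m')) by (apply lt_0_INR; lia).
    field. split; lra.
Qed.


Fixpoint ff (n k : nat) : R := match k with O => 1 | S k' => ff n k' * (INR n - INR k') end.

Lemma ff_SS n k : ff (S n) (S k) = INR (S n) * ff n k.
Proof.
  induction k.
  - change (ff (S n) 1) with (1 * (INR (S n) - INR 0)). change (ff n 0) with 1. simpl (INR 0). ring.
  - change (ff (S n) (S (S k))) with (ff (S n) (S k) * (INR (S n) - INR (S k))).
    change (ff n (S k)) with (ff n k * (INR n - INR k)).
    rewrite IHk. rewrite !(S_INR n), (S_INR k). ring.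
Qed.

Lemma ff_0S k : ff 0 (S k) = 0.
Proof. induction k; simpl in *; [lra|]. rewrite IHk; lra. Qed.

Lemma bn_fact n : forall k, bn n k * INR (fact k) = ff n k.
Proof.
  induction n; intros k.
  - destruct k; [simpl; lra|]. rewrite ff_0S. simpl bn. lra.
  - destruct k; [simpl; lra|]. rewrite ff_SS, bn_SS.
    replace (INR (fact (S k))) with (INR (S k) * INR (fact k)) by (rewrite <- mult_INR; reflexivity).
    transitivity (INR (S k) * (bn n k * INR (fact k)) + bn n (S k) * INR (fact (S k))).
    { replace (INR (fact (S k))) with (INR (S k) * INR (fact k)) by (rewrite <- mult_INR; reflexivity). ring. }
    rewrite !IHn. simpl ff. rewrite !S_INR. ring.
Qed.

Definition wN (N k : nat) : R := bn N k * INR (fact k) / INR N ^ k.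

Lemma wN_S N k : (1 <= N)%nat -> wN N (S k) = wN N k * (1 - INR k / INR N).
Proof.
  intros H. unfold wN. rewrite !bn_fact. simpl ff. simpl pow.
  assert (0 < INR N) by (apply lt_0_INR; lia). field. split; [lra|]. apply pow_nonzero. lra.
Qed.

Lemma wN_0 N : wN N 0 = 1.
Proof. unfold wN. simpl. rewrite bn_0. lra. Qed.

Lemma wN_props N : (1 <= N)%nat -> forall k, ((k <= N)%nat -> 0 <= wN N k <= 1) /\ ((N < k)%nat -> wN N k = 0).
Proof.
  intros HN. assert (0 < INR N) by (apply lt_0_INR; lia).
  induction k.
  - rewrite wN_0. split; [lra| lia].
  - rewrite wN_S by auto. destruct IHk as [IH1 IH2]. split.
    + intros Hk. destruct (IH1 ltac:(lia)).
      assert (INR k < INR N) by (apply lt_INR; lia).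
      assert (0 <= INR k) by apply pos_INR.
      assert (0 <= INR k / INR N <= 1). { split. apply Rdiv_le_0_compat; lra. unfold Rdiv. rewrite <- (Rinv_r (INR N)) by lra. apply Rmult_le_compat_r; [left; apply Rinv_0_lt_compat; lra| lra]. }
      split; [apply Rmult_le_pos; lra|]. assert (0 <= 1 - INR k / INR N <= 1) by lra. nra.
    + intros Hk. destruct (Nat.eq_dec k N).
      * subst. replace (INR N / INR N) with 1 by (field; lra). ring.
      * rewrite IH2 by lia. lra.
Qed.

Lemma wN_bound N k : (1 <= N)%nat -> 0 <= wN N k <= 1.
Proof.
  intros H. destruct (le_lt_dec k N). apply (wN_props N H k); auto.
  rewrite (proj2 (wN_props N H k)) by auto. lra.
Qed.

Lemma Un_cv_eventually u v l N1 : (forall N, (N1 <= N)%nat -> u N = v N) -> Un_cv v l -> Un_cv u l.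
Proof.
  intros H Hv eps He. destruct (Hv eps He) as [N2 HN2]. exists (max N1 N2). intros n Hn.
  rewrite H by lia. apply HN2. lia.
Qed.

Lemma cv_inv_INR : Un_cv (fun n => / INR n) 0.
Proof.
  apply is_lim_seq_Reals. replace (Finite 0) with (Rbar_inv p_infty) by reflexivity.
  apply is_lim_seq_inv. apply is_lim_seq_INR. discriminate.
Qed.

Lemma wN_cv k : Un_cv (fun N => wN N k) 1.
Proof.
  induction k.
  - intros eps He. exists 0%nat. intros. rewrite wN_0. unfold R_dist. rewrite Rminus_diag, Rabs_R0. lra.
  - apply (Un_cv_eventually _ (fun N => wN N k * (1 - INR k * / INR N)) _ 1%nat).
    { intros. rewrite wN_S; auto. }
    assert (Hc: Un_cv (fun N => wN N k * (1 - INR k * / INR N)) (1 * (1 - INR k * 0))).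
    { apply CV_mult; auto. apply CV_minus. intros eps He; exists 0%nat; intros; unfold R_dist; rewrite Rminus_diag, Rabs_R0; lra.
      apply (CV_mult (fun _ => INR k) (fun n => / INR n)). intros eps He; exists 0%nat; intros; unfold R_dist; rewrite Rminus_diag, Rabs_R0; lra.
      apply cv_inv_INR. }
    replace (1 * (1 - INR k * 0)) with 1 in Hc by ring. exact Hc.
Qed.


Lemma cv_le u l K c : Un_cv u l -> (forall n, (K <= n)%nat -> u n <= c) -> l <= c.
Proof.
  intros Hu H. destruct (Rle_or_lt l c) as [|Hlt]; auto. exfalso.
  destruct (Hu (l - c) ltac:(lra)) as [N HN]. specialize (HN (max N K) ltac:(lia)).
  specialize (H (max N K) ltac:(lia)). unfold R_dist in HN. apply Rabs_def2 in HN. lra.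
Qed.

Lemma cv_ge u l K c : Un_cv u l -> (forall n, (K <= n)%nat -> c <= u n) -> c <= l.
Proof.
  intros Hu H. destruct (Rle_or_lt c l) as [|Hlt]; auto. exfalso.
  destruct (Hu (c - l) ltac:(lra)) as [N HN]. specialize (HN (max N K) ltac:(lia)).
  specialize (H (max N K) ltac:(lia)). unfold R_dist in HN. apply Rabs_def2 in HN. lra.
Qed.

Lemma cv_abs_le u l a K c : Un_cv u l -> (forall n, (K <= n)%nat -> Rabs (u n - a) <= c) -> Rabs (l - a) <= c.
Proof.
  intros Hu H. apply Rabs_le. split.
  - assert (-c + a <= l); [|lra]. apply (cv_ge u l K); auto. intros n Hn. specialize (H n Hn). apply Rabs_le_between in H. lra.
  - assert (l <= c + a); [|lra]. apply (cv_le u l K); auto. intros n Hn. specialize (H n Hn). apply Rabs_le_between in H. lra.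
Qed.

Lemma sm_range_abs n K f M : (K <= n)%nat -> (forall k, Rabs (f k) <= M k) ->
  Rabs (sm n f - sm K f) <= sm n M - sm K M.
Proof.
  intros Hn H. induction n.
  - assert (K = 0%nat) by lia. subst. rewrite !Rminus_diag, Rabs_R0. lra.
  - destruct (Nat.eq_dec K (S n)). subst. rewrite !Rminus_diag, Rabs_R0. lra.
    rewrite !sm_S. specialize (IHn ltac:(lia)). specialize (H n).
    replace (sm n f + f n - sm K f) with ((sm n f - sm K f) + f n) by ring.
    eapply Rle_trans; [apply Rabs_triang|]. lra.
Qed.


Lemma Un_cv_ext2 u v l : (forall n, u n = v n) -> Un_cv v l -> Un_cv u l.
Proof. intros H Hv eps He. destruct (Hv eps He) as [N HN]. exists N. intros. rewrite H. auto. Qed.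

Lemma sm_cv K (f : nat -> nat -> R) g : (forall k, Un_cv (fun N => f N k) (g k)) ->
  Un_cv (fun N => sm K (f N)) (sm K g).
Proof.
  intros H. induction K.
  - intros eps He. exists 0%nat. intros. unfold R_dist. rewrite !sm_0, Rminus_diag, Rabs_R0. lra.
  - rewrite sm_S. apply (Un_cv_ext2 _ (fun N => sm K (f N) + f N K)).
    intros; rewrite sm_S; reflexivity. apply CV_plus; auto.
Qed.

Lemma sm_le_lim M LM n : (forall k, 0 <= M k) -> Un_cv (fun N => sm N M) LM -> sm n M <= LM.
Proof.
  intros HM Hc. apply (cv_ge _ _ n _ Hc). intros m Hm. induction Hm. lra. rewrite sm_S. specialize (HM m). lra.
Qed.

Lemma tannery (f : nat -> nat -> R) (g M : nat -> R) LM :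
  (forall k, Un_cv (fun N => f N k) (g k)) ->
  (forall N k, Rabs (f N k) <= M k) ->
  Un_cv (fun N => sm N M) LM ->
  (forall N k, (N < k)%nat -> f N k = 0) ->
  exists L0, Un_cv (fun N => sm N g) L0 /\ Un_cv (fun N => sm (S N) (f N)) L0.
Proof.
  intros Hf HM HLM Hz.
  assert (HM0 : forall k, 0 <= M k). { intros k. eapply Rle_trans; [apply Rabs_pos| apply (HM 0%nat)]. }
  assert (Hg : forall k, Rabs (g k) <= M k).
  { intros k. replace (g k) with (g k - 0) by ring. apply (cv_abs_le (fun N => f N k) _ 0 0); auto.
    intros. rewrite Rminus_0_r. auto. }
  assert (Hex : ex_series g).
  { apply ex_series_Rabs. apply (@ex_series_le R_AbsRing R_CompleteNormedModule _ M).
    - intros n. change (norm (Rabs (g n))) with (Rabs (Rabs (g n))). rewrite Rabs_Rabsolu. apply Hg.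
    - apply ex_series_Reals_1. exists LM. apply (Un_cv_ext2 _ (fun N => sm (S N) M)).
      intros; rewrite sm_sum_f_R0; reflexivity.
      intros eps He. destruct (HLM eps He) as [N HN]. exists N. intros. apply HN. lia. }
  apply ex_series_Reals_0 in Hex. destruct Hex as [L0 HS].
  assert (HS' : Un_cv (fun N => sm N g) L0).
  { intros eps He. destruct (HS eps He) as [N HN]. exists (S N). intros n Hn. destruct n; [lia|].
    rewrite <- sm_sum_f_R0. apply HN. lia. }
  exists L0. split; auto.
  assert (Htail : forall K, Rabs (L0 - sm K g) <= LM - sm K M).
  { intros K. apply (cv_abs_le _ _ _ K _ HS'). intros n Hn.
    eapply Rle_trans; [apply sm_range_abs; auto|]. pose proof (sm_le_lim M LM n HM0 HLM). lra. }
  intros eps He.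
  destruct (HLM (eps / 3) ltac:(lra)) as [K HK].
  destruct (sm_cv K f g Hf (eps / 3) ltac:(lra)) as [N1 HN1].
  exists (max K N1). intros n Hn.
  specialize (HK K ltac:(lia)). unfold R_dist in HK. pose proof (sm_le_lim M LM K HM0 HLM).
  rewrite Rabs_left1 in HK by lra.
  specialize (HN1 n ltac:(lia)). unfold R_dist in *.
  assert (H1 : Rabs (sm (S n) (f n) - sm K (f n)) <= LM - sm K M).
  { eapply Rle_trans. apply sm_range_abs. lia. apply (HM n). pose proof (sm_le_lim M LM (S n) HM0 HLM). lra. }
  specialize (Htail K).
  replace (sm (S n) (f n) - L0) with ((sm (S n) (f n) - sm K (f n)) + (sm K (f n) - sm K g) - (L0 - sm K g)) by ring.
  eapply Rle_lt_trans. apply Rabs_triang. rewrite Rabs_Ropp.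
  eapply Rle_lt_trans. apply Rplus_le_compat_r. apply Rabs_triang. lra.
Qed.


Lemma sm_mono_n n m f : (forall k, 0 <= f k) -> (n <= m)%nat -> sm n f <= sm m f.
Proof.
  intros Hf H. induction H; [lra|]. rewrite sm_S. specialize (Hf m). lra.
Qed.

Lemma sm_nonneg n f : (forall k, 0 <= f k) -> 0 <= sm n f.
Proof. intros. rewrite <- (sm_0 f). apply sm_mono_n; auto; lia. Qed.

Lemma bseq_bound D L : (forall j, (L < j)%nat -> D j = 0) ->
  exists K, 0 < K /\ forall k, Rabs (bseq D k) * 16 ^ k <= K.
Proof.
  intros HD.
  set (Dm8 := sm L (fun i => Rabs (D (S i)) * 16 ^ (S i))).
  destruct (INR_unbounded Dm8) as [k0 Hk0].
  set (K := 1 + sm (S k0) (fun k => Rabs (bseq D k) * 16 ^ k)).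
  assert (Hnn : forall k, 0 <= Rabs (bseq D k) * 16 ^ k).
  { intros. apply Rmult_le_pos. apply Rabs_pos. apply pow_le; lra. }
  assert (HK0 : 0 < K). { unfold K. pose proof (sm_nonneg (S k0) _ Hnn). lra. }
  exists K. split; auto.
  intros k. induction k as [k IH] using lt_wf_ind.
  destruct (le_lt_dec k k0) as [Hk|Hk].
  - unfold K. assert (Rabs (bseq D k) * 16 ^ k = sm (S k) (fun k => Rabs (bseq D k) * 16 ^ k) - sm k (fun k => Rabs (bseq D k) * 16 ^ k)) by (rewrite sm_S; ring).
    pose proof (sm_mono_n (S k) (S k0) _ Hnn ltac:(lia)). pose proof (sm_nonneg k _ Hnn). lra.
  - destruct k as [|k]; [lia|]. rewrite bseq_S.
    assert (Hpos : 0 < INR (S k)) by (apply lt_0_INR; lia).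
    rewrite Rabs_mult, Rabs_inv, (Rabs_right (INR (S k))) by lra.
    assert (Hs : Rabs (sm (S k) (fun i => D (S i) * bseq D (k - i))) * 16 ^ S k <= K * Dm8).
    { eapply Rle_trans. apply Rmult_le_compat_r. apply pow_le; lra. apply sm_abs.
      rewrite Rmult_comm, <- sm_scal.
      eapply Rle_trans with (sm (S k) (fun i => K * (Rabs (D (S i)) * 16 ^ S i))).
      - apply sm_le. intros i Hi. rewrite Rabs_mult.
        replace (16 ^ S k) with (16 ^ S i * 16 ^ (k - i)) by (rewrite <- pow_add; f_equal; lia).
        specialize (IH (k - i)%nat ltac:(lia)).
        pose proof (Rabs_pos (D (S i))). pose proof (pow_le 16 (S i) ltac:(lra)).
        transitivity (Rabs (D (S i)) * 16 ^ S i * (Rabs (bseq D (k - i)) * 16 ^ (k - i))); [right; ring|].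
        rewrite (Rmult_comm K). apply Rmult_le_compat_l; [nra|]. exact IH.
      - rewrite sm_scal. apply Rmult_le_compat_l; [lra|]. unfold Dm8.
        assert (Hn2 : forall i, 0 <= Rabs (D (S i)) * 16 ^ S i). { intros. apply Rmult_le_pos. apply Rabs_pos. apply pow_le; lra. }
        destruct (le_lt_dec (S k) L).
        + apply sm_mono_n; auto.
        + right. apply sm_tail. lia. intros i Hi. rewrite HD by lia. rewrite Rabs_R0. ring. }
    assert (HDm : Dm8 <= INR (S k)). { assert (INR k0 <= INR (S k)) by (apply le_INR; lia). lra. }
    assert (0 <= Dm8). { apply sm_nonneg. intros. apply Rmult_le_pos. apply Rabs_pos. apply pow_le; lra. }
    transitivity (/ INR (S k) * (Rabs (sm (S k) (fun i => D (S i) * bseq D (k - i))) * 16 ^ S k)); [right; ring|].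
    transitivity (/ INR (S k) * (K * Dm8)). apply Rmult_le_compat_l; [left; apply Rinv_0_lt_compat; lra| exact Hs].
    apply (Rmult_le_reg_l (INR (S k))); auto. field_simplify; [|lra]. nra.
Qed.


Definition Zh (h : nat -> R) (k : nat) : R := sm (S k) (fun s => (-1) ^ (k + s) * bn k s * h s).

Lemma Zh_0 h : Zh h 0 = h 0%nat.
Proof. unfold Zh, sm. simpl. lra. Qed.

Lemma Zh_S h k : Zh h (S k) = Zh (fun s => h (S s)) k - Zh h k.
Proof.
  unfold Zh. rewrite (sm_shift (S k)). rewrite (sm_shift k (fun s => (-1) ^ (k + s) * bn k s * h s)).
  rewrite !bn_0.
  assert (E : sm (S k) (fun s => (-1) ^ (S k + S s) * bn (S k) (S s) * h (S s)) =
     sm (S k) (fun s => (-1) ^ (k + s) * bn k s * h (S s)) + sm (S k) (fun s => (-1) ^ (k + s) * bn k (S s) * h (S s))).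
  { rewrite <- sm_plus. apply sm_ext. intros s _. rewrite bn_SS. replace (S k + S s)%nat with (S (S (k + s))) by lia. simpl. ring. }
  rewrite E, (sm_S k (fun s => (-1) ^ (k + s) * bn k (S s) * h (S s))), (bn_gt k (S k)) by lia.
  assert (E2 : sm k (fun s => (-1) ^ (k + S s) * bn k (S s) * h (S s)) = - sm k (fun s => (-1) ^ (k + s) * bn k (S s) * h (S s))).
  { replace (- sm k _) with ((-1) * sm k (fun s => (-1) ^ (k + s) * bn k (S s) * h (S s))) by ring.
    rewrite <- sm_scal. apply sm_ext. intros s _. replace (k + S s)%nat with (S (k + s)) by lia. simpl. ring. }
  rewrite E2. replace (S k + 0)%nat with (S (k + 0)) by lia. simpl ((-1) ^ S _). ring.
Qed.

Lemma Zh_lin h1 h2 a c k : Zh (fun s => a * h1 s + c * h2 s) k = a * Zh h1 k + c * Zh h2 k.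
Proof. unfold Zh. rewrite <- !sm_scal, <- sm_plus. apply sm_ext. intros. ring. Qed.

Lemma Zh_ext h1 h2 k : (forall s, h1 s = h2 s) -> Zh h1 k = Zh h2 k.
Proof. intros H. unfold Zh. apply sm_ext. intros. rewrite H. reflexivity. Qed.

Section Zu.
Variable u : R.
Definition Z1 k := Zh (fun s => cos (u * INR s)) k.
Definition Z2 k := Zh (fun s => sin (u * INR s)) k.

Lemma Z1_0 : Z1 0 = 1. Proof. unfold Z1. rewrite Zh_0. simpl. rewrite Rmult_0_r, cos_0. reflexivity. Qed.
Lemma Z2_0 : Z2 0 = 0. Proof. unfold Z2. rewrite Zh_0. simpl. rewrite Rmult_0_r, sin_0. reflexivity. Qed.

Lemma Z1_S k : Z1 (S k) = Z1 k * (cos u - 1) - Z2 k * sin u.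
Proof.
  unfold Z1, Z2. rewrite Zh_S.
  rewrite (Zh_ext _ (fun s => cos u * cos (u * INR s) + (- sin u) * sin (u * INR s))).
  - rewrite Zh_lin. ring.
  - intros s. rewrite S_INR, Rmult_plus_distr_l, Rmult_1_r, cos_plus. ring.
Qed.

Lemma Z2_S k : Z2 (S k) = Z1 k * sin u + Z2 k * (cos u - 1).
Proof.
  unfold Z1, Z2. rewrite Zh_S.
  rewrite (Zh_ext _ (fun s => sin u * cos (u * INR s) + cos u * sin (u * INR s))).
  - rewrite Zh_lin. ring.
  - intros s. rewrite S_INR, Rmult_plus_distr_l, Rmult_1_r, sin_plus. ring.
Qed.

Lemma Z_add i j : Z1 (i + j) = Z1 i * Z1 j - Z2 i * Z2 j /\ Z2 (i + j) = Z1 i * Z2 j + Z2 i * Z1 j.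
Proof.
  induction j.
  - rewrite Nat.add_0_r, Z1_0, Z2_0. split; ring.
  - replace (i + S j)%nat with (S (i + j)) by lia. rewrite !Z1_S, !Z2_S. destruct IHj as [H1 H2].
    rewrite H1, H2. split; ring.
Qed.

Lemma Z_bound k : Rabs (Z1 k) <= 3 ^ k /\ Rabs (Z2 k) <= 3 ^ k.
Proof.
  induction k.
  - rewrite Z1_0, Z2_0, Rabs_R0, Rabs_R1. simpl. lra.
  - rewrite Z1_S, Z2_S. destruct IHk as [H1 H2].
    assert (Hx : Rabs (cos u - 1) <= 2). { pose proof (COS_bound u). apply Rabs_le; lra. }
    assert (Hy : Rabs (sin u) <= 1). { pose proof (SIN_bound u). apply Rabs_le; lra. }
    assert (Hy' : Rabs (- sin u) <= 1) by (rewrite Rabs_Ropp; auto).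
    pose proof (Rabs_pos (Z1 k)). pose proof (Rabs_pos (Z2 k)). pose proof (Rabs_pos (sin u)). pose proof (Rabs_pos (cos u - 1)).
    simpl pow. split.
    + replace (Z1 k * (cos u - 1) - Z2 k * sin u) with (Z1 k * (cos u - 1) + Z2 k * (- sin u)) by ring.
      eapply Rle_trans; [apply Rabs_triang|]. rewrite !Rabs_mult. rewrite Rabs_Ropp. nra.
    + eapply Rle_trans; [apply Rabs_triang|]. rewrite !Rabs_mult. nra.
Qed.
End Zu.


Ltac Rring := match goal with |- @eq _ ?x ?y => change (@eq R x y); ring end.

Lemma is_pseries_lin (a b : nat -> R) x la lb al be :
  is_pseries a x la -> is_pseries b x lb ->
  is_pseries (fun n => al * a n + be * b n) x (al * la + be * lb).
Proof.
  intros Ha Hb.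
  pose proof (is_pseries_scal al a x la (Rmult_comm _ _) Ha) as H1.
  pose proof (is_pseries_scal be b x lb (Rmult_comm _ _) Hb) as H2.
  pose proof (is_pseries_plus _ _ x _ _ H1 H2) as H3.
  eapply is_pseries_ext; [|exact H3]. intros n. reflexivity.
Qed.


Lemma is_pseries_sm L (A : nat -> nat -> R) x (l : nat -> R) :
  (forall i, is_pseries (A i) x (l i)) -> (exists (a : nat -> R) (la : R), is_pseries a x la) ->
  is_pseries (fun n => sm L (fun i => A i n)) x (sm L l).
Proof.
  intros H [a [la Ha]]. induction L.
  - pose proof (is_pseries_lin a a x la la 0 0 Ha Ha) as H0.
    rewrite sm_0. replace (0 * la + 0 * la) with 0 in H0 by ring.
    eapply is_pseries_ext; [|exact H0].
    intros n. cbv beta. rewrite sm_0. Rring.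
  - pose proof (is_pseries_lin _ _ x _ _ 1 1 IHL (H L)) as H0.
    rewrite sm_S. assert (E : sm L l + l L = 1 * sm L l + 1 * l L) by ring. rewrite E.
    eapply is_pseries_ext; [|exact H0]. intros n. cbv beta. rewrite sm_S. Rring.
Qed.

Lemma is_derive_sm L (F : nat -> R -> R) (dF : nat -> R) t :
  (forall i, is_derive (F i) t (dF i)) -> is_derive (fun x => sm L (fun i => F i x)) t (sm L dF).
Proof.
  intros H. induction L.
  - eapply is_derive_ext; [|apply (is_derive_const 0)]. intros. rewrite sm_0. reflexivity.
  - eapply is_derive_ext. 2:{ rewrite sm_S. apply (is_derive_plus _ _ t _ _ IHL (H L)). }
    intros x. rewrite sm_S. reflexivity.
Qed.

Lemma Derive_eta (f : R -> R) (t l : R) : is_derive f t l -> Derive (fun x : R => f x) t = l.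
Proof. intros H. apply is_derive_unique. exact H. Qed.

Lemma H_deriv (R0 I0 g1 g2 : R -> R) (t r i : R) : is_derive R0 t r -> is_derive I0 t i ->
  is_derive g1 t (r * g1 t - i * g2 t) -> is_derive g2 t (r * g2 t + i * g1 t) ->
  is_derive (fun x => exp (- R0 x) * (g1 x * cos (I0 x) + g2 x * sin (I0 x))) t 0 /\ is_derive (fun x => exp (- R0 x) * (g2 x * cos (I0 x) - g1 x * sin (I0 x))) t 0.
Proof.
  intros HR HI H1 H2. split; auto_derive.
  - repeat split; eexists; eauto.
    rewrite (Derive_eta R0 _ _ HR), (Derive_eta I0 _ _ HI), (Derive_eta g1 _ _ H1), (Derive_eta g2 _ _ H2). ring.
  - repeat split; eexists; eauto.
  - rewrite (Derive_eta R0 _ _ HR), (Derive_eta I0 _ _ HI), (Derive_eta g1 _ _ H1), (Derive_eta g2 _ _ H2). ring.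
Qed.

Lemma is_derive_monom c n t : is_derive (fun x => c * x ^ S n) t (c * (INR (S n) * t ^ n)).
Proof.
  auto_derive; auto. rewrite S_INR. destruct n; simpl; ring.
Qed.

Section ODE.
Variables (D : nat -> R) (L : nat) (u K : R).
Hypothesis HD : forall j, (L < j)%nat -> D j = 0.
Hypothesis HK : forall k, Rabs (bseq D k) * 16 ^ k <= K.

Let b := bseq D.
Definition ar n := bseq D n * Z1 u n.
Definition ai n := bseq D n * Z2 u n.

Lemma ar_bound n : Rabs (ar n) <= K * (3 / 16) ^ n /\ Rabs (ai n) <= K * (3 / 16) ^ n.
Proof.
  unfold ar, ai. rewrite !Rabs_mult. destruct (Z_bound u n) as [H1 H2].
  specialize (HK n). replace ((3/16)^n) with (3^n * / 16^n) by (unfold Rdiv; rewrite Rpow_mult_distr, pow_inv; reflexivity).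
  assert (0 < 16 ^ n) by (apply pow_lt; lra).
  assert (Hb : Rabs (bseq D n) <= K * / 16 ^ n).
  { apply (Rmult_le_reg_r (16 ^ n)); auto. field_simplify; lra. }
  pose proof (Rabs_pos (bseq D n)). pose proof (Rabs_pos (Z1 u n)). pose proof (Rabs_pos (Z2 u n)).
  assert (0 < / 16 ^ n) by (apply Rinv_0_lt_compat; lra).
  split.
  - transitivity (K * / 16 ^ n * 3 ^ n). apply Rmult_le_compat; auto. right; ring.
  - transitivity (K * / 16 ^ n * 3 ^ n). apply Rmult_le_compat; auto. right; ring.
Qed.

Lemma radius_gen (a : nat -> R) t : (forall n, Rabs (a n) <= K * (3 / 16) ^ n) -> Rabs t < 3 ->
  Rbar_lt (Rabs t) (CV_radius a).
Proof.
  intros Ha Ht. apply Rbar_lt_le_trans with (Finite 3); [simpl; auto|].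
  apply Rbar_not_lt_le. intros Hc. rewrite <- (Rabs_right 3) in Hc by lra. apply CV_disk_outside in Hc.
  apply Hc. apply is_lim_seq_abs_0.
  apply (is_lim_seq_le_le (fun _ => 0) _ (fun n => K * (9/16) ^ n)).
  - intros n. split; [apply Rabs_pos|]. rewrite Rabs_mult. rewrite <- RPow_abs.
    rewrite (Rabs_right 3) by lra. replace ((9/16) ^ n) with ((3/16) ^ n * 3 ^ n) by (rewrite <- Rpow_mult_distr; f_equal; lra).
    rewrite <- Rmult_assoc. apply Rmult_le_compat_r. apply pow_le; lra. apply Ha.
  - apply is_lim_seq_const.
  - replace (Finite 0) with (Rbar_mult K 0) by (simpl; f_equal; ring).
    apply is_lim_seq_scal_l. apply is_lim_seq_geom. rewrite Rabs_right; lra.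
Qed.

Lemma rad_ar t : Rabs t < 3 -> Rbar_lt (Rabs t) (CV_radius ar).
Proof. intros. apply radius_gen; auto. intros; apply ar_bound. Qed.
Lemma rad_ai t : Rabs t < 3 -> Rbar_lt (Rabs t) (CV_radius ai).
Proof. intros. apply radius_gen; auto. intros; apply ar_bound. Qed.

Definition PSi (a : nat -> R) i n := if le_lt_dec i n then a (n - i)%nat else 0.

Lemma PS_incr_n_PSi (a : nat -> R) i n : PS_incr_n a i n = PSi a i n.
Proof. rewrite PS_incr_n_simplify. reflexivity. Qed.

Lemma coef_gen (F : nat -> R) (Fi : nat -> R) n :
  (forall i, (L <= i)%nat -> Fi i = 0) ->
  sm (S n) Fi = sm L (fun i => if le_lt_dec i n then Fi i else 0).
Proof.
  intros HF. set (G := fun i => if le_lt_dec i n then Fi i else 0).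
  transitivity (sm (max (S n) L) G).
  - symmetry. transitivity (sm (S n) G).
    + apply sm_tail. lia. intros k Hk. unfold G. destruct (le_lt_dec k n); [lia|reflexivity].
    + apply sm_ext. intros k Hk. unfold G. destruct (le_lt_dec k n); [reflexivity|lia].
  - apply sm_tail. lia. intros k Hk. unfold G. destruct (le_lt_dec k n); auto. apply HF; lia.
Qed.

Lemma coef_ar n : PS_derive ar n =
  sm L (fun i => D (S i) * (Z1 u (S i) * PSi ar i n - Z2 u (S i) * PSi ai i n)).
Proof.
  unfold PS_derive, ar at 1. rewrite bseq_S.
  assert (Hpos : INR (S n) <> 0) by (apply not_0_INR; lia).
  transitivity (sm (S n) (fun i => D (S i) * (Z1 u (S i) * ar (n - i) - Z2 u (S i) * ai (n - i)))).
  - transitivity (sm (S n) (fun i => D (S i) * bseq D (n - i)) * Z1 u (S n)); [field; auto|].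
    rewrite Rmult_comm, <- sm_scal. apply sm_ext. intros i Hi.
    replace (S n) with (S i + (n - i))%nat at 1 by lia. rewrite (proj1 (Z_add u _ _)). unfold ar, ai. ring.
  - rewrite (coef_gen (fun _ => 0)). apply sm_ext. intros i Hi. unfold PSi. destruct (le_lt_dec i n); ring.
    intros i Hi. rewrite HD by lia. ring.
Qed.

Lemma coef_ai n : PS_derive ai n =
  sm L (fun i => D (S i) * (Z1 u (S i) * PSi ai i n + Z2 u (S i) * PSi ar i n)).
Proof.
  unfold PS_derive, ai at 1. rewrite bseq_S.
  assert (Hpos : INR (S n) <> 0) by (apply not_0_INR; lia).
  transitivity (sm (S n) (fun i => D (S i) * (Z1 u (S i) * ai (n - i) + Z2 u (S i) * ar (n - i)))).
  - transitivity (sm (S n) (fun i => D (S i) * bseq D (n - i)) * Z2 u (S n)); [field; auto|].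
    rewrite Rmult_comm, <- sm_scal. apply sm_ext. intros i Hi.
    replace (S n) with (S i + (n - i))%nat at 1 by lia. rewrite (proj2 (Z_add u _ _)). unfold ar, ai. ring.
  - rewrite (coef_gen (fun _ => 0)). apply sm_ext. intros i Hi. unfold PSi. destruct (le_lt_dec i n); ring.
    intros i Hi. rewrite HD by lia. ring.
Qed.

Definition gr t := PSeries ar t.
Definition gi t := PSeries ai t.
Definition Rd t := sm L (fun i => D (S i) * Z1 u (S i) * t ^ i).
Definition Id t := sm L (fun i => D (S i) * Z2 u (S i) * t ^ i).
Definition Rp t := sm L (fun i => D (S i) / INR (S i) * Z1 u (S i) * t ^ S i).
Definition Ip t := sm L (fun i => D (S i) / INR (S i) * Z2 u (S i) * t ^ S i).

Lemma is_pseries_PSi (a : nat -> R) i t : Rbar_lt (Rabs t) (CV_radius a) ->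
  is_pseries (PSi a i) t (t ^ i * PSeries a t).
Proof.
  intros H. eapply is_pseries_ext. intros n. apply PS_incr_n_PSi.
  assert (Hp : is_pseries a t (PSeries a t)).
  { apply PSeries_correct. apply CV_disk_correct. apply CV_disk_inside. auto. }
  pose proof (is_pseries_incr_n a i t (PSeries a t) Hp) as H2. rewrite pow_n_pow in H2. exact H2.
Qed.

Lemma gr_derive t : Rabs t < 3 -> is_derive gr t (Rd t * gr t - Id t * gi t).
Proof.
  intros Ht. pose proof (rad_ar t Ht) as Hr. pose proof (rad_ai t Ht) as Hi.
  assert (Hc : is_pseries (fun n => sm L (fun i => D (S i) * (Z1 u (S i) * PSi ar i n - Z2 u (S i) * PSi ai i n))) t
      (sm L (fun i => D (S i) * (Z1 u (S i) * (t ^ i * gr t) - Z2 u (S i) * (t ^ i * gi t))))).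
  { apply is_pseries_sm.
    - intros i. assert (E : D (S i) * (Z1 u (S i) * (t ^ i * gr t) - Z2 u (S i) * (t ^ i * gi t)) =
        (D (S i) * Z1 u (S i)) * (t ^ i * gr t) + (- (D (S i) * Z2 u (S i))) * (t ^ i * gi t)) by ring.
      rewrite E. eapply is_pseries_ext; [| apply is_pseries_lin; apply is_pseries_PSi; eauto].
      intros n. cbv beta. Rring.
    - exists ar, (gr t). apply PSeries_correct. apply CV_disk_correct. apply CV_disk_inside. auto. }
  assert (E : sm L (fun i => D (S i) * (Z1 u (S i) * (t ^ i * gr t) - Z2 u (S i) * (t ^ i * gi t))) = Rd t * gr t - Id t * gi t).
  { unfold Rd, Id. transitivity (sm L (fun i => gr t * (D (S i) * Z1 u (S i) * t ^ i)) - sm L (fun i => gi t * (D (S i) * Z2 u (S i) * t ^ i))).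
    rewrite <- sm_minus; apply sm_ext; intros; ring. rewrite !sm_scal; ring. }
  rewrite E in Hc.
  assert (Hs : is_pseries (PS_derive ar) t (Rd t * gr t - Id t * gi t)).
  { eapply is_pseries_ext; [|exact Hc]. intros n. cbv beta. symmetry. apply coef_ar. }
  pose proof (is_derive_PSeries ar t Hr) as Hd.
  apply is_pseries_unique in Hs. rewrite <- Hs. exact Hd.
Qed.

Lemma gi_derive t : Rabs t < 3 -> is_derive gi t (Rd t * gi t + Id t * gr t).
Proof.
  intros Ht. pose proof (rad_ar t Ht) as Hr. pose proof (rad_ai t Ht) as Hi.
  assert (Hc : is_pseries (fun n => sm L (fun i => D (S i) * (Z1 u (S i) * PSi ai i n + Z2 u (S i) * PSi ar i n))) t
      (sm L (fun i => D (S i) * (Z1 u (S i) * (t ^ i * gi t) + Z2 u (S i) * (t ^ i * gr t))))).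
  { apply is_pseries_sm.
    - intros i. assert (E : D (S i) * (Z1 u (S i) * (t ^ i * gi t) + Z2 u (S i) * (t ^ i * gr t)) =
        (D (S i) * Z1 u (S i)) * (t ^ i * gi t) + (D (S i) * Z2 u (S i)) * (t ^ i * gr t)) by ring.
      rewrite E. eapply is_pseries_ext; [| apply is_pseries_lin; apply is_pseries_PSi; eauto].
      intros n. cbv beta. Rring.
    - exists ar, (gr t). apply PSeries_correct. apply CV_disk_correct. apply CV_disk_inside. auto. }
  assert (E : sm L (fun i => D (S i) * (Z1 u (S i) * (t ^ i * gi t) + Z2 u (S i) * (t ^ i * gr t))) = Rd t * gi t + Id t * gr t).
  { unfold Rd, Id. transitivity (sm L (fun i => gi t * (D (S i) * Z1 u (S i) * t ^ i)) + sm L (fun i => gr t * (D (S i) * Z2 u (S i) * t ^ i))).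
    rewrite <- sm_plus; apply sm_ext; intros; ring. rewrite !sm_scal; ring. }
  rewrite E in Hc.
  assert (Hs : is_pseries (PS_derive ai) t (Rd t * gi t + Id t * gr t)).
  { eapply is_pseries_ext; [|exact Hc]. intros n. cbv beta. symmetry. apply coef_ai. }
  pose proof (is_derive_PSeries ai t Hi) as Hd.
  apply is_pseries_unique in Hs. rewrite <- Hs. exact Hd.
Qed.


Lemma Rp_derive t : is_derive Rp t (Rd t).
Proof.
  unfold Rp, Rd. apply (is_derive_sm L (fun i x => D (S i) / INR (S i) * Z1 u (S i) * x ^ S i)).
  intros i. assert (E: D (S i) * Z1 u (S i) * t ^ i = D (S i) / INR (S i) * Z1 u (S i) * (INR (S i) * t ^ i)).
  { assert (INR (S i) <> 0) by (apply not_0_INR; lia). field; auto. }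
  cbv beta. rewrite E. apply is_derive_monom.
Qed.

Lemma Ip_derive t : is_derive Ip t (Id t).
Proof.
  unfold Ip, Id. apply (is_derive_sm L (fun i x => D (S i) / INR (S i) * Z2 u (S i) * x ^ S i)).
  intros i. assert (E: D (S i) * Z2 u (S i) * t ^ i = D (S i) / INR (S i) * Z2 u (S i) * (INR (S i) * t ^ i)).
  { assert (INR (S i) <> 0) by (apply not_0_INR; lia). field; auto. }
  cbv beta. rewrite E. apply is_derive_monom.
Qed.

Lemma sm_zero_at0 (c : nat -> R) : sm L (fun i => c i * 0 ^ S i) = 0.
Proof. transitivity (sm L (fun _ => 0)); [|apply sm_const0]. apply sm_ext. intros. simpl. ring. Qed.

Lemma ode_final : gr 1 = exp (Rp 1) * cos (Ip 1) /\ gi 1 = exp (Rp 1) * sin (Ip 1).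
Proof.
  set (H1 := fun x => exp (- Rp x) * (gr x * cos (Ip x) + gi x * sin (Ip x))).
  set (H2 := fun x => exp (- Rp x) * (gi x * cos (Ip x) - gr x * sin (Ip x))).
  assert (Hd : forall t, 0 <= t <= 1 -> is_derive H1 t 0 /\ is_derive H2 t 0).
  { intros t Ht. assert (Rabs t < 3) by (rewrite Rabs_right; lra).
    apply H_deriv with (r := Rd t) (i := Id t).
    apply Rp_derive. apply Ip_derive. apply gr_derive; auto. apply gi_derive; auto. }
  assert (E1 : H1 0 = H1 1) by (apply eq_is_derive; [intros; apply Hd; auto| lra]).
  assert (E2 : H2 0 = H2 1) by (apply eq_is_derive; [intros; apply Hd; auto| lra]).
  assert (R0 : Rp 0 = 0). { unfold Rp. apply (sm_zero_at0 (fun i => D (S i) / INR (S i) * Z1 u (S i))). }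
  assert (I0 : Ip 0 = 0). { unfold Ip. apply (sm_zero_at0 (fun i => D (S i) / INR (S i) * Z2 u (S i))). }
  assert (G0 : gr 0 = 1). { unfold gr. rewrite PSeries_0. unfold ar. rewrite bseq_0, Z1_0. ring. }
  assert (G0' : gi 0 = 0). { unfold gi. rewrite PSeries_0. unfold ai. rewrite bseq_0, Z2_0. ring. }
  unfold H1, H2 in E1, E2. rewrite R0, I0, G0, G0', Ropp_0, exp_0, cos_0, sin_0 in E1, E2.
  rewrite exp_Ropp in E1, E2.
  set (c := cos (Ip 1)) in *. set (s := sin (Ip 1)) in *. set (e := exp (Rp 1)) in *.
  assert (He : 0 < e) by apply exp_pos.
  assert (Hcs : c * c + s * s = 1) by (unfold c, s; pose proof (sin2_cos2 (Ip 1)); unfold Rsqr in *; lra).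
  assert (A1 : gr 1 * c + gi 1 * s = e). { apply (Rmult_eq_reg_l (/ e)). rewrite Rinv_l; lra. apply Rinv_neq_0_compat; lra. }
  assert (A2 : gi 1 * c - gr 1 * s = 0). { assert (/ e <> 0) by (apply Rinv_neq_0_compat; lra).
    apply (Rmult_eq_reg_l (/ e)); auto. rewrite Rmult_0_r. lra. }
  split.
  - transitivity (c * (gr 1 * c + gi 1 * s) - s * (gi 1 * c - gr 1 * s)).
    + transitivity (gr 1 * (c * c + s * s)). rewrite Hcs; ring. ring.
    + rewrite A1, A2. ring.
  - transitivity (s * (gr 1 * c + gi 1 * s) + c * (gi 1 * c - gr 1 * s)).
    + transitivity (gi 1 * (c * c + s * s)). rewrite Hcs; ring. ring.
    + rewrite A1, A2. ring.
Qed.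

Lemma series_final : infinite_sum ar (exp (Rp 1) * cos (Ip 1)) /\ infinite_sum ai (exp (Rp 1) * sin (Ip 1)).
Proof.
  destruct ode_final as [F1 F2]. rewrite <- F1, <- F2.
  assert (H1 : Rabs 1 < 3) by (rewrite Rabs_R1; lra).
  split.
  - assert (Hp : is_pseries ar 1 (gr 1)).
    { apply PSeries_correct. apply CV_disk_correct. apply CV_disk_inside. apply rad_ar; auto. }
    apply is_pseries_Reals in Hp. intros eps He. destruct (Hp eps He) as [N HN]. exists N. intros n Hn.
    specialize (HN n Hn). rewrite (sum_eq _ (fun i => ar i * 1 ^ i)); auto. intros; rewrite pow1; ring.
  - assert (Hp : is_pseries ai 1 (gi 1)).
    { apply PSeries_correct. apply CV_disk_correct. apply CV_disk_inside. apply rad_ai; auto. }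
    apply is_pseries_Reals in Hp. intros eps He. destruct (Hp eps He) as [N HN]. exists N. intros n Hn.
    specialize (HN n Hn). rewrite (sum_eq _ (fun i => ai i * 1 ^ i)); auto. intros; rewrite pow1; ring.
Qed.
End ODE.


Lemma wN_bound_all N k : 0 <= wN N k <= 1.
Proof.
  destruct N. 2:{ apply wN_bound; lia. }
  destruct k. rewrite wN_0; lra. unfold wN. rewrite bn_gt by lia. unfold Rdiv. rewrite !Rmult_0_l. lra.
Qed.

Lemma wN_zero N k : (N < k)%nat -> wN N k = 0.
Proof. intros. unfold wN. rewrite bn_gt by lia. unfold Rdiv. ring. Qed.

Lemma pow_half_le s k : (s <= k)%nat -> (/ 2) ^ k <= (/ 2) ^ s.
Proof.
  intros H. replace k with (s + (k - s))%nat by lia. rewrite pow_add.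
  assert (0 <= (/2) ^ s) by (apply pow_le; lra).
  assert ((/2) ^ (k - s) <= 1). { induction (k - s)%nat; simpl; [lra|]. assert (0 <= (/2)^n) by (apply pow_le; lra). lra. }
  assert (0 <= (/2) ^ (k - s)) by (apply pow_le; lra). nra.
Qed.

Lemma term_bound K (b : nat -> R) w k s : (forall k, Rabs (b k) * 16 ^ k <= K) -> 0 <= w <= 1 ->
  Rabs ((-1) ^ (k + s) * bn k s * (w * b k)) <= K * (/ 2) ^ s * (/ 2) ^ k.
Proof.
  intros HK Hw.
  assert (HK0 : 0 <= K). { specialize (HK 0%nat). pose proof (Rabs_pos (b 0%nat)). simpl in HK. lra. }
  rewrite !Rabs_mult, pow_1_abs, Rmult_1_l, (Rabs_right (bn k s)) by (apply Rle_ge, bn_ge0).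
  rewrite (Rabs_right w) by lra.
  assert (0 <= (/2)^s) by (apply pow_le; lra). assert (0 <= (/2)^k) by (apply pow_le; lra).
  destruct (le_lt_dec s k) as [Hsk|Hsk].
  2:{ rewrite bn_gt by lia. rewrite Rmult_0_l. apply Rmult_le_pos; [apply Rmult_le_pos|]; lra. }
  assert (Hb : Rabs (b k) <= K * (/ 16) ^ k).
  { specialize (HK k). assert (0 < 16 ^ k) by (apply pow_lt; lra). rewrite pow_inv.
    apply (Rmult_le_reg_r (16 ^ k)); auto. field_simplify; lra. }
  pose proof (bn_le_pow k s). pose proof (bn_ge0 k s). pose proof (Rabs_pos (b k)).
  assert (E : 2 ^ k * (K * (/ 16) ^ k) = K * ((/ 2) ^ k * (/ 4) ^ k)).
  { rewrite <- Rpow_mult_distr. transitivity (K * (2 * / 16) ^ k). rewrite Rpow_mult_distr. ring.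
    f_equal. f_equal. field. }
  assert ((/ 4) ^ k <= (/2) ^ s).
  { transitivity ((/2) ^ k); [|apply pow_half_le; auto]. apply pow_incr. lra. }
  assert (0 <= (/4) ^ k) by (apply pow_le; lra).
  transitivity (bn k s * Rabs (b k)). { assert (0 <= bn k s * Rabs (b k)) by nra. nra. }
  transitivity (2 ^ k * (K * (/ 16) ^ k)). { apply Rmult_le_compat; auto. }
  rewrite E. rewrite Rmult_assoc. apply Rmult_le_compat_l; auto. rewrite Rmult_comm. apply Rmult_le_compat_r; auto.
Qed.

Lemma geo_cv c q : 0 <= q < 1 -> Un_cv (fun N => sm N (fun k => c * q ^ k)) (c / (1 - q)).
Proof.
  intros Hq. assert (Hs : is_series (fun n => q ^ n) (/ (1 - q))) by (apply is_series_geom; rewrite Rabs_right; lra).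
  apply is_series_Reals in Hs.
  assert (H2 : Un_cv (fun N => c * sum_f_R0 (fun n => q ^ n) N) (c * / (1 - q))).
  { apply (CV_mult (fun _ => c)). intros eps He; exists 0%nat; intros; unfold R_dist; rewrite Rminus_diag, Rabs_R0; lra. exact Hs. }
  intros eps He. destruct (H2 eps He) as [N HN]. exists (S N). intros n Hn. destruct n; [lia|].
  replace (sm (S n) (fun k => c * q ^ k)) with (c * sum_f_R0 (fun k => q ^ k) n).
  unfold Rdiv. apply HN. lia. rewrite sm_sum_f_R0, <- sm_scal. reflexivity.
Qed.

Lemma infsum_of_sm f l : Un_cv (fun N => sm N f) l -> infinite_sum f l.
Proof.
  intros H eps He. destruct (H eps He) as [N HN]. exists N. intros n Hn. rewrite sm_sum_f_R0. apply HN. lia.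
Qed.

Lemma neg1_pow_minus l t : (t <= l)%nat -> (-1) ^ (l - t) = (-1) ^ (l + t).
Proof.
  intros H. replace (l + t)%nat with ((l - t) + 2 * t)%nat by lia. rewrite pow_add, pow_mult.
  replace ((-1) ^ 2) with 1 by (simpl; ring). rewrite pow1. ring.
Qed.

Lemma bn_C l t : (t <= l)%nat -> bn l t = Binomial.C l t.
Proof.
  revert t. induction l; intros t Ht.
  - assert (t = 0%nat) by lia. subst. unfold Binomial.C. simpl. lra.
  - destruct t.
    + rewrite bn_0. unfold Binomial.C. rewrite Nat.sub_0_r. simpl (fact 0). pose proof (fact_pos' (S l)). set (x := INR (fact (S l))) in *. simpl (INR 1). field. lra.
    + rewrite bn_SS. destruct (Nat.eq_dec t l).
      * subst. rewrite bn_nn, (bn_gt l (S l)) by lia. unfold Binomial.C. rewrite Nat.sub_diag. simpl (fact 0).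
        pose proof (fact_pos' (S l)). set (x := INR (fact (S l))) in *. simpl (INR 1). field. lra.
      * rewrite !IHl by lia. apply pascal. lia.
Qed.


Lemma series_of_sm g l : Un_cv (fun n => sm n g) l -> Series g = l.
Proof. intros H. apply is_series_unique. apply is_series_Reals. apply infsum_of_sm. auto. Qed.

Lemma cv_const_mult c (u : nat -> R) l : Un_cv u l -> Un_cv (fun n => u n * c) (l * c).
Proof.
  intros H. apply (CV_mult u (fun _ => c)); auto.
  intros eps He; exists 0%nat; intros; unfold R_dist; rewrite Rminus_diag, Rabs_R0; lra.
Qed.

Lemma Un_cv_ext' u v l l' : (forall n, u n = v n) -> l = l' -> Un_cv v l' -> Un_cv u l.
Proof. intros H -> Hv. apply (Un_cv_ext2 u v); auto. Qed.

Theorem mainTheorem1 :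
  forall (lmax : nat) (C : nat -> R) (N0 : nat) (P : nat -> list bool -> R),
    (1 <= lmax)%nat ->
    (forall N : nat, (N0 <= N)%nat ->
       is_joint_law N (P N) /\ symmetric N (P N) /\
       (forall k : nat, (1 <= k)%nat -> (k <= lmax)%nat -> (k <= N)%nat ->
          corr_coef N (P N) k = C k) /\
       (forall k : nat, (lmax < k)%nat -> (k <= N)%nat ->
          corr_coef N (P N) k = 0)) ->
    exists pinf : nat -> R,
      (forall s : nat, Un_cv (fun N => count_prob N (P N) s) (pinf s)) /\
      (forall u : R,
         infinite_sum (fun s => pinf s * cos (u * INR s))
                      (exp (expo_re lmax C u) * cos (expo_im lmax C u)) /\
         infinite_sum (fun s => pinf s * sin (u * INR s))
                      (exp (expo_re lmax C u) * sin (expo_im lmax C u))).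
Proof.
  intros lmax C N0 P Hl Hyp.
  set (Cp := fun j => if Nat.leb j lmax then C j else 0).
  set (D := Dof Cp).
  assert (HD : forall j, (lmax < j)%nat -> D j = 0).
  { intros j Hj. unfold D, Dof, Cp. replace (Nat.leb j lmax) with false by (symmetry; apply Nat.leb_gt; lia).
    unfold Rdiv. ring. }
  destruct (bseq_bound D lmax HD) as [K [HK0 HK]].
  set (b := bseq D).
  set (N1 := max N0 1).
  set (pform := fun N s => sm (S N) (fun k => (-1) ^ (k + s) * bn k s * (wN N k * b k))).
  assert (Hform : forall N, (N1 <= N)%nat -> forall s, count_prob N (P N) s = pform N s).
  { intros N HN s. destruct (Hyp N ltac:(lia)) as [[Hpos Hsum] [Hsym [Hc1 Hc2]]].
    rewrite count_prob_formula by auto. unfold pform. apply sm_ext. intros k Hk.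
    assert (HNp : 0 < INR N) by (apply lt_0_INR; lia).
    assert (HM := main_rec N (P N) Cp ltac:(lia)).
    assert (H0 : Pk N (P N) 0 [] = 1). { unfold Pk. rewrite Nat.sub_0_r. exact Hsum. }
    assert (HG : forall j, (1 <= j)%nat -> (j <= N)%nat -> INR N ^ j * G N (P N) j (repeat true j) = Cp j).
    { intros j Hj1 HjN. unfold Cp. destruct (Nat.leb j lmax) eqn:E.
      - apply Nat.leb_le in E. apply Hc1; auto.
      - apply Nat.leb_gt in E. apply Hc2; auto. }
    specialize (HM H0 HG k ltac:(lia)).
    f_equal. unfold wN. fold b in HM.
    assert (0 < INR N ^ k) by (apply pow_lt; auto).
    assert (E : Pk N (P N) k (repeat true k) = INR (fact k) * b k / INR N ^ k).
    { unfold b, D. rewrite <- HM. field. lra. }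
    rewrite E. field. lra. }
  assert (Hlim : forall s, Un_cv (fun N => pform N s) (Series (fun k => (-1) ^ (k + s) * bn k s * b k))).
  { intros s.
    destruct (tannery (fun N k => (-1) ^ (k + s) * bn k s * (wN N k * b k)) (fun k => (-1) ^ (k + s) * bn k s * b k)
      (fun k => K * (/ 2) ^ s * (/ 2) ^ k) (K * (/ 2) ^ s / (1 - / 2))) as [L0 [HL1 HL2]].
    - intros k. replace ((-1) ^ (k + s) * bn k s * b k) with (((-1) ^ (k + s) * bn k s) * (1 * b k)) by ring.
      apply (CV_mult (fun _ => (-1) ^ (k + s) * bn k s)).
      intros eps He; exists 0%nat; intros; unfold R_dist; rewrite Rminus_diag, Rabs_R0; lra.
      apply cv_const_mult. apply wN_cv.
    - intros N k. apply term_bound. exact HK. apply wN_bound_all.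
    - apply geo_cv. lra.
    - intros N k Hk. rewrite wN_zero by auto. ring.
    - rewrite (series_of_sm _ _ HL1). exact HL2. }
  set (pinf := fun s => Series (fun k => (-1) ^ (k + s) * bn k s * b k)).
  exists pinf. split.
  { intros s. apply (Un_cv_eventually _ (fun N => pform N s) _ N1). intros; apply Hform; auto. apply Hlim. }
  intros u.
  assert (Hsm2 : forall n, sm n (fun k => 1 * (/ 2) ^ k) <= 2).
  { intros n. assert (E : 1 / (1 - / 2) = 2) by field.
    pose proof (sm_le_lim (fun k => 1 * (/ 2) ^ k) _ n ltac:(intros k; cbv beta; rewrite Rmult_1_l; apply pow_le; lra) (geo_cv 1 (/ 2) ltac:(lra))).
    lra. }
  assert (Hpb : forall N s, Rabs (pform N s) <= 2 * K * (/ 2) ^ s).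
  { intros N s. unfold pform. eapply Rle_trans. apply sm_abs.
    eapply Rle_trans. apply sm_le. intros k _. apply term_bound. exact HK. apply wN_bound_all.
    transitivity (K * (/ 2) ^ s * sm (S N) (fun k => 1 * (/ 2) ^ k)).
    - rewrite <- sm_scal. right. apply sm_ext. intros. ring.
    - specialize (Hsm2 (S N)). assert (0 <= K * (/2) ^ s) by (apply Rmult_le_pos; [lra| apply pow_le; lra]). nra. }
  assert (Hpz : forall N s, (N < s)%nat -> pform N s = 0).
  { intros N s Hs. unfold pform. transitivity (sm (S N) (fun _ => 0)); [|apply sm_const0].
    apply sm_ext. intros k Hk. rewrite bn_gt by lia. ring. }
  assert (Hexch : forall (h : nat -> R) N, sm (S N) (fun s => pform N s * h s) = sm (S N) (fun k => wN N k * b k * Zh h k)).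
  { intros h N. unfold pform.
    transitivity (sm (S N) (fun s => sm (S N) (fun k => (-1) ^ (k + s) * bn k s * (wN N k * b k) * h s))).
    { apply sm_ext. intros s _. rewrite Rmult_comm, <- sm_scal. apply sm_ext. intros. ring. }
    rewrite sm_swap. apply sm_ext. intros k Hk. unfold Zh. rewrite <- sm_scal.
    symmetry. transitivity (sm (S N) (fun s => wN N k * b k * ((-1) ^ (k + s) * bn k s * h s))).
    - symmetry. apply sm_tail. lia. intros s Hs. rewrite (bn_gt k s) by lia. ring.
    - apply sm_ext. intros. ring. }
  assert (Hode := series_final D lmax u K HD HK).
  destruct Hode as [HO1 HO2].
  assert (Hre : Rp D lmax u 1 = expo_re lmax C u /\ Ip D lmax u 1 = expo_im lmax C u).
  { unfold Rp, Ip, expo_re, expo_im. rewrite !sumR_seq1. split; apply sm_ext; intros i Hi; unfold sm.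
    all: rewrite pow1, Rmult_1_r.
    all: try (unfold Z1); try (unfold Z2); unfold Zh.
    all: rewrite <- sm_scal; apply sm_ext; intros t Ht.
    all: unfold D; rewrite Dof_S; unfold Cp; replace (Nat.leb (S i) lmax) with true by (symmetry; apply Nat.leb_le; lia).
    all: rewrite neg1_pow_minus by lia; rewrite bn_C by lia; rewrite (Rmult_comm (INR t) u).
    all: replace (INR (fact (S i))) with (INR (S i) * INR (fact i)) by (rewrite <- mult_INR; reflexivity).
    all: pose proof (fact_pos' i); assert (0 < INR (S i)) by (apply lt_0_INR; lia); field; lra. }
  destruct Hre as [Hre Him]. rewrite Hre, Him in *.
  assert (Gen : forall (h : nat -> R) (Zf : nat -> R) Lim,
     (forall s, Rabs (h s) <= 1) -> (forall k, Zh h k = Zf k) ->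
     (forall k, Rabs (b k * Zf k) <= K * (3 / 16) ^ k) ->
     infinite_sum (fun k => b k * Zf k) Lim -> infinite_sum (fun s => pinf s * h s) Lim).
  { intros h Zf Lim Hh HZ HZb HLim.
    destruct (tannery (fun N s => pform N s * h s) (fun s => pinf s * h s) (fun s => 2 * K * (/ 2) ^ s) (2 * K / (1 - / 2))) as [LA [HA1 HA2]].
    - intros s. apply cv_const_mult. apply Hlim.
    - intros N s. rewrite Rabs_mult. specialize (Hh s). pose proof (Hpb N s). pose proof (Rabs_pos (h s)).
      pose proof (Rabs_pos (pform N s)). nra.
    - apply geo_cv. lra.
    - intros N s Hs. rewrite Hpz; auto. ring.
    - destruct (tannery (fun N k => wN N k * b k * Zf k) (fun k => b k * Zf k) (fun k => K * (3 / 16) ^ k) (K / (1 - 3 / 16))) as [LB [HB1 HB2]].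
      + intros k. apply (Un_cv_ext' _ (fun N => wN N k * (b k * Zf k)) _ (1 * (b k * Zf k))).
        intros; ring. ring. apply cv_const_mult. apply wN_cv.
      + intros N k. rewrite Rmult_assoc, Rabs_mult. pose proof (wN_bound_all N k). rewrite (Rabs_right (wN N k)) by lra.
        specialize (HZb k). pose proof (Rabs_pos (b k * Zf k)). nra.
      + apply geo_cv. lra.
      + intros N k Hk. rewrite wN_zero; auto. ring.
      + assert (LA = LB).
        { apply (UL_sequence (fun N => sm (S N) (fun s => pform N s * h s))); auto.
          apply (Un_cv_ext2 _ (fun N => sm (S N) (fun k => wN N k * b k * Zf k))); auto.
          intros N. rewrite Hexch. apply sm_ext. intros. rewrite HZ. reflexivity. }
        assert (LB = Lim).
        { apply (UL_sequence (fun n => sm n (fun k => b k * Zf k))); auto.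
          intros eps He. destruct (HLim eps He) as [N HN]. exists (S N). intros n Hn. destruct n; [lia|].
          rewrite <- sm_sum_f_R0. apply HN. lia. }
        subst. apply infsum_of_sm. auto. }
  split.
  - apply (Gen (fun s => cos (u * INR s)) (Z1 u)); auto.
    + intros. apply Rabs_le. apply COS_bound.
    + intros k. rewrite Rabs_mult. pose proof (proj1 (ar_bound D u K HK k)). unfold ar in H. rewrite Rabs_mult in H. exact H.
  - apply (Gen (fun s => sin (u * INR s)) (Z2 u)); auto.
    + intros. apply Rabs_le. apply SIN_bound.
    + intros k. rewrite Rabs_mult. pose proof (proj2 (ar_bound D u K HK k)). unfold ai in H. rewrite Rabs_mult in H. exact H.
Qed.
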